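(* In the bilevel setting of the context, suppose (A2) and (A4) hold. Then the GMFCQ holds at $x^*$ for $\Omega_1$ if and only if the GMFCQ holds for $\Omega_2$ at $(x^*,y^*,\mu^*,\xi^* )$.
   Context: Lower-level problem $(P_x)$: $\min_yf(x,y)$ s.t. $h(x,y)=0$, $g(x,y)\le0$; upper-level constraints $H(x,y)=0\in\mathbb{R}^p$, $G(x,y)\le0\in\mathbb{R}^q$, upper objective $F$; $(x,y)\in\mathbb{R}^n\times\mathbb{R}^m$, $h\to\mathbb{R}^r$, $g\to\mathbb{R}^s$; $f,g,h\in C^3$, $F,G,H\in C^2$ around $(x^*,y^* )$. $\mathcal{L}(x;y,\mu,\xi)=f+\mu^Th+\xi^Tg$; $(\mu^*,\xi^* )$ satisfies $\nabla_y\mathcal{L}(x^*;y^*,\mu^*,\xi^* )=0$, $h(x^*,y^* )=0$, $0\le\xi^*\perp g(x^*,y^* )\le0$. $I_G=\{i:G_i(x^*,y^* )=0\}$. (A2) SSOSC: for every such KKT multiplier, $d_y^T\nabla^2_{yy}\mathcal{L}(x^*;y^*,\mu^*,\xi^* )d_y>0$ for all $d_y\ne0$ with $\mathcal{J}_yh(x^*,y^* )d_y=0$ and $\nabla_yg_i(x^*,y^* )^Td_y=0$ whenever $g_i(x^*,y^* )=0,\xi^*_i>0$. (A4) LICQ: $\{\nabla_yh_i(x^*,y^* )\}_{i\in[r]}\cup\{\nabla_yg_i(x^*,y^* ):g_i(x^*,y^* )=0\}$ linearly independent. Under (A2),(A4) there are locally Lipschitz $(y(x),\mu(x),\xi(x))$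 near $x^*$, equal to $(y^*,\mu^*,\xi^* )$ at $x^*$, locally uniquely solving the KKT system of $(P_x)$. $\Omega_1=\{x:H(x,y(x))=0,G(x,y(x))\le0\}$; $\Omega_2=\{(x,y,\mu,\xi):H(x,y)=0,G(x,y)\le0,\nabla_y\mathcal{L}(x;y,\mu,\xi)=0,h(x,y)=0,g(x,y)-\Pi_{\mathbb{R}^s_-}(g(x,y)+\xi)=0\}$ with $\Pi_{\mathbb{R}^s_-}(z)_i=\min\{0,z_i\}$. $\partial\Pi_{\mathbb{R}^s_-}(z)$ (Clarke Jacobian) = diagonal $W=\mathrm{diag}(w)$ with $w_i=1$ if $z_i<0$, $0$ if $z_i>0$, $w_i\in[0,1]$ if $z_i=0$. All derivatives below at $(x^*,y^*,\mu^*,\xi^* )$. For such $W$: $\mathcal{A}(W)=\begin{pmatrix}\nabla^2_{yy}\mathcal{L}&\mathcal{J}_yh^T&\mathcal{J}_yg^T\\ \mathcal{J}_yh&0&0\\(I-W)\mathcal{J}_yg&0&-W\end{pmatrix}$ (invertible under (A2),(A4)), $\mathcal{H}(W)=\mathcal{A}(W)^{-1}\begin{pmatrix}\nabla^2_{yx}\mathcal{L}\\ \mathcal{J}_xh\\(I-W)\mathcal{J}_xg\end{pmatrix}$. GMFCQ for $\Omega_1$ at $x^*$: for every $W\in\partial\Pi_{\mathbb{R}^s_-}(g(x^*,y^* )+\xi^* )$, $M:=\mathcal{J}_xH-\mathcal{J}_yH[I_m\ 0\ 0]\mathcal{H}(W)$ has full row rank and there is $d_x$ with $Md_x=0$ and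 $(\nabla_xG_i^T-\nabla_yG_i^T[I_m\ 0\ 0]\mathcal{H}(W))d_x<0$ for $i\in I_G$. GMFCQ for $\Omega_2$ at $(x^*,y^*,\mu^*,\xi^* )$: for every such $W$, $A=\begin{pmatrix}\mathcal{J}_xH&\mathcal{J}_yH&0&0\\ \nabla^2_{yx}\mathcal{L}&\nabla^2_{yy}\mathcal{L}&\mathcal{J}_yh^T&\mathcal{J}_yg^T\\ \mathcal{J}_xh&\mathcal{J}_yh&0&0\\(I-W)\mathcal{J}_xg&(I-W)\mathcal{J}_yg&0&-W\end{pmatrix}$ has full row rank and there is $d=(d_x,d_y,d_\mu,d_\xi)\in\ker A$ with $\nabla_xG_i^Td_x+\nabla_yG_i^Td_y<0$ for $i\in I_G$. *)

(* Defs.v *)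
From mathcomp Require Import all_boot all_order all_algebra.
Set Implicit Arguments. Unset Strict Implicit. Unset Printing Implicit Defensive.
Import Order.TTheory GRing.Theory Num.Theory.
Local Open Scope ring_scope.

(* All derivatives are evaluated at (xs,ys,mus,xis) and are given as matrices:
   Lyy = nabla^2_yy L (m x m), Lyx = nabla^2_yx L (m x n),
   Jxh, Jyh = J_x h, J_y h (r x n, r x m), Jxg, Jyg (s x n, s x m),
   JxH, JyH (p x n, p x m), JxG, JyG (q x n, q x m) (row i = nabla G_i^T). *)

(* w = diagonal of an element W of the Clarke Jacobian of Pi_{R^s_-} at z. *)
Definition clarke_proj_minus {R : realFieldType} {s : nat}
    (z : 'I_s -> R) (w : 'I_s -> R) : Prop :=
  forall i, (z i < 0 -> w i = 1) /\ (0 < z i -> w i = 0)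
            /\ (z i = 0 -> 0 <= w i <= 1).

Definition Wmx {R : realFieldType} {s : nat} (w : 'I_s -> R) : 'M[R]_s :=
  diag_mx (\row_i w i).

Definition AW {R : realFieldType} {m r s : nat}
    (Lyy : 'M[R]_m) (Jyh : 'M[R]_(r, m)) (Jyg : 'M[R]_(s, m))
    (w : 'I_s -> R) : 'M[R]_(m + (r + s)) :=
  col_mx (row_mx Lyy (row_mx Jyh^T Jyg^T))
    (col_mx (row_mx Jyh (row_mx (0 : 'M_(r, r)) (0 : 'M_(r, s))))
            (row_mx ((1%:M - Wmx w) *m Jyg)
                    (row_mx (0 : 'M_(s, r)) (- Wmx w)))).

Definition BW {R : realFieldType} {n m r s : nat}
    (Lyx : 'M[R]_(m, n)) (Jxh : 'M[R]_(r, n)) (Jxg : 'M[R]_(s, n))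
    (w : 'I_s -> R) : 'M[R]_(m + (r + s), n) :=
  col_mx Lyx (col_mx Jxh ((1%:M - Wmx w) *m Jxg)).

Definition HyW {R : realFieldType} {n m r s : nat}
    (Lyy : 'M[R]_m) (Lyx : 'M[R]_(m, n)) (Jxh : 'M[R]_(r, n)) (Jyh : 'M[R]_(r, m))
    (Jxg : 'M[R]_(s, n)) (Jyg : 'M[R]_(s, m)) (w : 'I_s -> R) : 'M[R]_(m, n) :=
  usubmx (invmx (AW Lyy Jyh Jyg w) *m BW Lyx Jxh Jxg w).

Definition GMFCQ_Omega1 {R : realFieldType} {n m r s p q : nat}
    (Lyy : 'M[R]_m) (Lyx : 'M[R]_(m, n)) (Jxh : 'M[R]_(r, n)) (Jyh : 'M[R]_(r, m))
    (Jxg : 'M[R]_(s, n)) (Jyg : 'M[R]_(s, m))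
    (JxH : 'M[R]_(p, n)) (JyH : 'M[R]_(p, m))
    (JxG : 'M[R]_(q, n)) (JyG : 'M[R]_(q, m))
    (g0 xi : 'I_s -> R) (G0 : 'I_q -> R) : Prop :=
  forall w : 'I_s -> R, clarke_proj_minus (fun i => g0 i + xi i) w ->
    let Hy := HyW Lyy Lyx Jxh Jyh Jxg Jyg w in
    let M := JxH - JyH *m Hy in
    row_free M /\
    exists dx : 'cV[R]_n, M *m dx = 0 /\
      forall i : 'I_q, G0 i = 0 -> ((JxG - JyG *m Hy) *m dx) i 0 < 0.

Definition GMFCQ_Omega2 {R : realFieldType} {n m r s p q : nat}
    (Lyy : 'M[R]_m) (Lyx : 'M[R]_(m, n)) (Jxh : 'M[R]_(r, n)) (Jyh : 'M[R]_(r, m))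
    (Jxg : 'M[R]_(s, n)) (Jyg : 'M[R]_(s, m))
    (JxH : 'M[R]_(p, n)) (JyH : 'M[R]_(p, m))
    (JxG : 'M[R]_(q, n)) (JyG : 'M[R]_(q, m))
    (g0 xi : 'I_s -> R) (G0 : 'I_q -> R) : Prop :=
  forall w : 'I_s -> R, clarke_proj_minus (fun i => g0 i + xi i) w ->
    let A : 'M[R]_(p + (m + (r + s)), n + (m + (r + s))) :=
      col_mx (row_mx JxH (row_mx JyH (0 : 'M_(p, r + s))))
             (row_mx (BW Lyx Jxh Jxg w) (AW Lyy Jyh Jyg w)) in
    row_free A /\
    exists d : 'cV[R]_(n + (m + (r + s))), A *m d = 0 /\
      forall i : 'I_q, G0 i = 0 ->
        (JxG *m usubmx d + JyG *m usubmx (dsubmx d)) i 0 < 0.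

Definition SSOSC {R : realFieldType} {m r s : nat}
    (Lyy : 'M[R]_m) (Jyh : 'M[R]_(r, m)) (Jyg : 'M[R]_(s, m))
    (g0 xi : 'I_s -> R) : Prop :=
  forall dy : 'cV[R]_m, dy != 0 -> Jyh *m dy = 0 ->
    (forall i, g0 i = 0 -> 0 < xi i -> (Jyg *m dy) i 0 = 0) ->
    0 < (dy^T *m Lyy *m dy) 0 0.

Definition LICQ {R : realFieldType} {m r s : nat}
    (Jyh : 'M[R]_(r, m)) (Jyg : 'M[R]_(s, m)) (g0 : 'I_s -> R) : Prop :=
  forall (a : 'rV[R]_r) (b : 'rV[R]_s),
    (forall i, g0 i != 0 -> b 0 i = 0) ->
    a *m Jyh + b *m Jyg = 0 -> a = 0 /\ b = 0.

(* Main.v *)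
Require Import Defs.
From mathcomp Require Import all_boot all_order all_algebra.
From mathcomp Require Import ring lra.
Import Order.TTheory GRing.Theory Num.Theory.
Set Implicit Arguments. Unset Strict Implicit.
Local Open Scope ring_scope.
Lemma w01 (R : realFieldType) (z w : R) :
  (z < 0 -> w = 1) /\ (0 < z -> w = 0) /\ (z = 0 -> 0 <= w <= 1) -> 0 <= w <= 1.
Proof.
case=> [h1 [h2 h3]]; case: (ltrgtP z 0) => hz.
- by rewrite h1 // ler01 lexx.
- by rewrite h2 // lexx ler01.
- exact: h3.
Qed.

Lemma prod_nonneg (R : realFieldType) (w u d : R) :
  0 <= w <= 1 -> (1 - w) * u = w * d -> 0 <= u * d.
Proof.
case/andP=> w0 w1 E.
case: (eqVneq w 0) => [w00|wn0].
  by move: E; rewrite w00 subr0 mul1r mul0r => ->; rewrite mul0r.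
have wp : 0 < w by rewrite lt_neqAle eq_sym wn0.
have : 0 <= w * (u * d).
  have -> : w * (u * d) = (1 - w) * (u * u) by rewrite mulrCA -E; ring.
  by apply: mulr_ge0; [rewrite subr_ge0 | exact: sqr_ge0].
by rewrite pmulr_rge0.
Qed.
Lemma AW_ker (R : realFieldType) (m r s : nat)
    (Lyy : 'M[R]_m) (Jyh : 'M[R]_(r, m)) (Jyg : 'M[R]_(s, m))
    (g0 : 'I_s -> R) (xi : 'I_s -> R)
    (Hg0 : forall i, g0 i <= 0) (Hxi : forall i, 0 <= xi i)
    (Hcompl : forall i, xi i * g0 i = 0)
    (HA2 : SSOSC Lyy Jyh Jyg g0 xi)
    (HA4 : LICQ Jyh Jyg g0) (w : 'I_s -> R)
    (Hw : clarke_proj_minus (fun i => g0 i + xi i) w)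
    (dy : 'cV[R]_m) (dmu : 'cV[R]_r) (dxi : 'cV[R]_s) :
  AW Lyy Jyh Jyg w *m col_mx dy (col_mx dmu dxi) = 0 ->
  dy = 0 /\ dmu = 0 /\ dxi = 0.
Proof.
rewrite /AW !(mul_col_mx, mul_row_col) !mul0mx !add0r addr0 => /eqP.
rewrite !col_mx_eq0 => /and3P[/eqP E1 /eqP E2 /eqP E3].
set u := Jyg *m dy.
have Ei : forall i, (1 - w i) * u i 0 = w i * dxi i 0.
  move=> i; have := congr1 (fun M : 'cV[R]_s => M i 0) E3.
  rewrite -mulmxA mulmxBl mul1mx mulNmx /Wmx !mul_diag_mx !mxE.
  move/(congr1 (fun x => x + w i * dxi i 0)); rewrite add0r => <-; ring.
have W01 : forall i, 0 <= w i <= 1 by move=> i; exact: (w01 (Hw i)).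
have Q : (dy^T *m Lyy *m dy) 0 0 <= 0.
  have -> : dy^T *m Lyy *m dy = - (u^T *m dxi).
    have L : Lyy *m dy = - (Jyh^T *m dmu + Jyg^T *m dxi).
      by apply/eqP; rewrite -addr_eq0 E1.
    rewrite -mulmxA L mulmxN mulmxDr !mulmxA -!trmx_mul E2 trmx0 mul0mx add0r.
    by [].
  rewrite mxE oppr_le0 mxE; apply: sumr_ge0 => j _; rewrite mxE.
  exact: prod_nonneg (W01 j) (Ei j).
have dy0 : dy = 0.
  case: (eqVneq dy 0) => // dyn0.
  have : 0 < (dy^T *m Lyy *m dy) 0 0.
    apply: HA2 => // i gi xip.
    have wi : w i = 0 by case: (Hw i) => _ [h _]; apply: h; rewrite gi add0r.
    by have := Ei i; rewrite wi subr0 mul1r mul0r.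
  by rewrite ltNge Q.
move: E1; rewrite dy0 mulmx0 add0r => E1.
have [a0 b0] : dmu^T = 0 /\ dxi^T = 0.
  apply: HA4.
    move=> i gi; rewrite mxE.
    have gl : g0 i < 0 by rewrite lt_neqAle gi Hg0.
    have xi0 : xi i = 0.
      by have := Hcompl i; move/eqP; rewrite mulf_eq0 (negbTE gi) orbF => /eqP.
    have wi : w i = 1 by case: (Hw i) => h _; apply: h; rewrite xi0 addr0.
    by have := Ei i; rewrite wi subrr mul0r mul1r => <-.
  by rewrite -[Jyh]trmxK -[Jyg]trmxK -!trmx_mul -raddfD /= E1 trmx0.
split=> //; split.
  by apply: trmx_inj; rewrite a0 trmx0.
by apply: trmx_inj; rewrite b0 trmx0.
Qed.
Lemma rf_ker (R : fieldType) m n (X : 'M[R]_(m, n)) (v : 'rV_m) :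
  row_free X -> v *m X = 0 -> v = 0.
Proof. by move=> rf h; apply: (row_free_inj rf); rewrite /= h mul0mx. Qed.

Lemma rowmx0_mul (R : realFieldType) a m k c (A : 'M[R]_(a, m)) (X : 'M[R]_(m + k, c)) :
  A *m usubmx X = row_mx A (0 : 'M_(a, k)) *m X.
Proof. by rewrite -{2}[X]vsubmxK mul_row_col mul0mx addr0. Qed.

Lemma main_w (R : realFieldType) n m k p q (JxH : 'M[R]_(p, n)) (Py : 'M[R]_(p, m))
  (Bm : 'M[R]_(m + k, n)) (K : 'M[R]_(m + k)) (JxG : 'M[R]_(q, n)) (Gy : 'M[R]_(q, m))
  (G0 : 'I_q -> R) :
  K \in unitmx ->
  (row_free (JxH - Py *m usubmx (invmx K *m Bm)) /\ exists dx : 'cV_n,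
     (JxH - Py *m usubmx (invmx K *m Bm)) *m dx = 0 /\
     forall i, G0 i = 0 -> ((JxG - Gy *m usubmx (invmx K *m Bm)) *m dx) i 0 < 0) <->
  (row_free (col_mx (row_mx JxH (row_mx Py (0 : 'M_(p, k)))) (row_mx Bm K)) /\ exists d : 'cV_(n + (m + k)),
     col_mx (row_mx JxH (row_mx Py (0 : 'M_(p, k)))) (row_mx Bm K) *m d = 0 /\
     forall i, G0 i = 0 -> (JxG *m usubmx d + Gy *m usubmx (dsubmx d)) i 0 < 0).
Proof.
move=> Ku.
rewrite !rowmx0_mul.
set P := row_mx Py 0.
set Gz := row_mx Gy (0 : 'M_(q, k)).
set Hf := invmx K *m Bm.
set M := JxH - P *m Hf.
set A := col_mx (row_mx JxH P) (row_mx Bm K).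
have vA : forall (a : 'rV_p) (b : 'rV_(m + k)),
    row_mx a b *m A = row_mx (a *m JxH + b *m Bm) (a *m P + b *m K).
  by move=> a b; rewrite /A mul_row_col !mul_mx_row add_row_mx.
have Ad : forall (x : 'cV_n) (z : 'cV_(m + k)),
    A *m col_mx x z = col_mx (JxH *m x + P *m z) (Bm *m x + K *m z).
  by move=> x z; rewrite /A mul_col_mx !mul_row_col.
have aM : forall a : 'rV_p,
    a *m M = a *m JxH + (- (a *m P *m invmx K)) *m Bm.
  by move=> a; rewrite /M /Hf mulmxBr mulNmx !mulmxA.
have Gx : forall x : 'cV_n,
    (JxG - Gz *m Hf) *m x = JxG *m x + Gz *m (Hf *m - x).
  by move=> x; rewrite mulmxBl !mulmxN !mulmxA.
split.
- case=> rfM [dx [Mdx Gdx]]; split.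
    apply: inj_row_free => v Hv.
    move: Hv; rewrite -[v]hsubmxK vA => /eqP; rewrite row_mx_eq0.
    case/andP=> /eqP e1 /eqP e2.
    have bK : rsubmx v *m K = - (lsubmx v *m P).
      by apply/eqP; rewrite -addr_eq0 addrC e2.
    have bE : rsubmx v = - (lsubmx v *m P *m invmx K).
      by rewrite -[rsubmx v]mulmx1 -(mulmxV Ku) mulmxA bK mulNmx.
    have a0 : lsubmx v = 0.
      by apply: (rf_ker rfM); rewrite aM -bE.
    by rewrite bE a0 !mul0mx oppr0 row_mx0.
  exists (col_mx dx (Hf *m - dx)); split.
    rewrite Ad /Hf !mulmxN !mulmxA (mulmxV Ku) mul1mx subrr.
    by move: Mdx; rewrite /M /Hf mulmxBl !mulmxA => ->; rewrite col_mx0.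
  by move=> i /Gdx; rewrite col_mxKu col_mxKd Gx rowmx0_mul.
- case=> rfA [d [Ad0 Gd]]; split.
    apply: inj_row_free => a Ha.
    have : row_mx a (- (a *m P *m invmx K)) = 0.
      apply: (rf_ker rfA); rewrite vA -aM Ha mulNmx -[_ *m invmx K *m K]mulmxA (mulVmx Ku) mulmx1.
      by rewrite subrr row_mx0.
    by move/eqP; rewrite row_mx_eq0 => /andP[/eqP].
  have [e1 e2] : JxH *m usubmx d + P *m dsubmx d = 0 /\ Bm *m usubmx d + K *m dsubmx d = 0.
    by move: Ad0; rewrite -{1}[d]vsubmxK Ad => /eqP; rewrite col_mx_eq0 => /andP[/eqP -> /eqP ->].
  have zE : dsubmx d = Hf *m - usubmx d.
    have Kz : K *m dsubmx d = - (Bm *m usubmx d).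
      by apply/eqP; rewrite -addr_eq0 addrC e2.
    by rewrite -[dsubmx d]mul1mx -(mulVmx Ku) -mulmxA Kz /Hf !mulmxN mulmxA.
  exists (usubmx d); split.
    by move: e1; rewrite zE !mulmxN mulmxA /M mulmxBl.
  by move=> i /Gd; rewrite (rowmx0_mul Gy) Gx -zE.
Qed.

Lemma AW_unit (R : realFieldType) (m r s : nat)
    (Lyy : 'M[R]_m) (Jyh : 'M[R]_(r, m)) (Jyg : 'M[R]_(s, m))
    (g0 : 'I_s -> R) (xi : 'I_s -> R)
    (Hg0 : forall i, g0 i <= 0) (Hxi : forall i, 0 <= xi i)
    (Hcompl : forall i, xi i * g0 i = 0)
    (HA2 : SSOSC Lyy Jyh Jyg g0 xi)
    (HA4 : LICQ Jyh Jyg g0) (w : 'I_s -> R)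
    (Hw : clarke_proj_minus (fun i => g0 i + xi i) w) :
  AW Lyy Jyh Jyg w \in unitmx.
Proof.
rewrite -unitmx_tr -row_free_unit; apply: inj_row_free => v Hv.
have Hd : AW Lyy Jyh Jyg w *m v^T = 0.
  by rewrite -[AW _ _ _ _]trmxK -trmx_mul Hv trmx0.
apply: trmx_inj; rewrite trmx0.
move: (v^T) Hd => d; rewrite -{1}[d]vsubmxK -{1}[dsubmx d]vsubmxK.
case/(AW_ker Hg0 Hxi Hcompl HA2 HA4 Hw) => [e1 [e2 e3]].
by rewrite -[d]vsubmxK -[dsubmx d]vsubmxK e1 e2 e3 !col_mx0.
Qed.

Theorem proposition4p1 (R : realFieldType) (n m r s p q : nat)
    (Jyf : 'rV[R]_m)
    (Lyy : 'M[R]_m) (Lyx : 'M[R]_(m, n))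
    (Jxh : 'M[R]_(r, n)) (Jyh : 'M[R]_(r, m))
    (Jxg : 'M[R]_(s, n)) (Jyg : 'M[R]_(s, m))
    (JxH : 'M[R]_(p, n)) (JyH : 'M[R]_(p, m))
    (JxG : 'M[R]_(q, n)) (JyG : 'M[R]_(q, m))
    (g0 : 'I_s -> R) (mu : 'I_r -> R) (xi : 'I_s -> R) (G0 : 'I_q -> R)
    (* KKT conditions for (mus, xis) at (xs, ys) *)
    (Hstat : Jyf + (\row_i mu i) *m Jyh + (\row_i xi i) *m Jyg = 0)
    (Hg0 : forall i, g0 i <= 0) (Hxi : forall i, 0 <= xi i)
    (Hcompl : forall i, xi i * g0 i = 0)
    (HA2 : SSOSC Lyy Jyh Jyg g0 xi)
    (HA4 : LICQ Jyh Jyg g0) :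
  GMFCQ_Omega1 Lyy Lyx Jxh Jyh Jxg Jyg JxH JyH JxG JyG g0 xi G0 <->
  GMFCQ_Omega2 Lyy Lyx Jxh Jyh Jxg Jyg JxH JyH JxG JyG g0 xi G0.
Proof.
split=> H w Hw; have Ku := AW_unit Hg0 Hxi Hcompl HA2 HA4 Hw;
  have key := @main_w _ _ _ _ _ _ JxH JyH (BW Lyx Jxh Jxg w) (AW Lyy Jyh Jyg w) JxG JyG G0 Ku.
  exact: (proj1 key (H w Hw)).
exact: (proj2 key (H w Hw)).
Qed.
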